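(* Every 2-regular graph $G=(V,E)$ on a finite vertex set $V$ with $|V|$ even is B-factorizable.
   Context: Let $V$ be a finite set with $|V|$ even. $K=\binom{V}{2}$ is the set of 2-element subsets of $V$. An equal partition of $V$ is an unordered pair $\{H,A\}$ of disjoint subsets with $H\cup A=V$ and $|H|=|A|=|V|/2$; $C=C(V)$ is the set of equal partitions. For $c=\{H,A\}\in C$, $B_c$ is the complete bipartite graph with parts $H$ and $A$. Vectors live in $\mathbb N^{K\cup C}$ with $\mathbb N=\{0,1,2,\dots\}$; $v|_K$ denotes the restriction to coordinates in $K$. For $E\subseteq K$, $\chi_E\in\{0,1\}^K$ is its indicator vector. For $E\subseteq K$ and $c\in C$, $\chi_{E,c}\in\mathbb N^{K\cup C}$ has $K$-components $\chi_E$ and $C$-components equal to the indicator of $c$. $PM(V)=\{\chi_{q,c}: c\in C,\ q\text{ a perfect matching of }B_c\}$. For $\mathcal M\subseteq\mathbb N^{K\cup C}$, $\mathbf N(\mathcal M)$ is the set of finite nonnegative integer combinations of elements of $\mathcal M$, and $\overline{\mathbf N}(\mathcal M)=\{v\in\mathbb N^{K\cup C}: kv\in\mathbf N(\mathcal M)\text{ for some integer }k\ge1\}$. A regular graph $G=(V,E)$ is B-factorizable if every $v\in\overline{\mathbf N}(PM(V))$ with $v|_K=\chi_E$ belongs to $\mathbf N(PM(V))$. *)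

(* Defs.v *)
From mathcomp Require Import all_boot.
Set Implicit Arguments. Unset Strict Implicit. Unset Printing Implicit Defensive.

Section Defs.
Variable V : finType.

Definition Kset := {e : {set V} | #|e| == 2}.

Definition isEqPart (c : {set {set V}}) : bool :=
  [exists H : {set V}, exists A : {set V},
     [&& c == [set H; A], [disjoint H & A], H :|: A == setT & #|H| == #|A|]].

Definition Cset := {c : {set {set V}} | isEqPart c}.

(* coordinates K ∪ C and vectors in N^(K ∪ C) *)
Definition coord := (Kset + Cset)%type.
Definition vec := coord -> nat.

Definition edgeB (c : Cset) (e : Kset) : Prop :=
  exists (H A : {set V}) (x y : V),
    val c = [set H; A] /\ [disjoint H & A] /\ H :|: A = setT /\ #|H| = #|A| /\
    x \in H /\ y \in A /\ val e = [set x; y].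

Definition perfect_matching (c : Cset) (q : {set Kset}) : Prop :=
  (forall e, e \in q -> edgeB c e) /\
  (forall x : V, #|[set e in q | x \in val e]| = 1).

Definition chiEc (E : {set Kset}) (c : Cset) : vec :=
  fun j => match j with
           | inl e => nat_of_bool (e \in E)
           | inr c' => nat_of_bool (c' == c)
           end.

Definition PM (v : vec) : Prop :=
  exists (c : Cset) (q : {set Kset}), perfect_matching c q /\ v = chiEc q c.

Definition Ncomb (M : vec -> Prop) (v : vec) : Prop :=
  exists (n : nat) (f : 'I_n -> vec),
    (forall i, M (f i)) /\ forall j, v j = \sum_(i < n) f i j.

Definition Nbar (M : vec -> Prop) (v : vec) : Prop :=
  exists k : nat, 1 <= k /\ Ncomb M (fun j => k * v j).

Definition deg (E : {set Kset}) (x : V) : nat := #|[set e in E | x \in val e]|.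
Definition regular_of (r : nat) (E : {set Kset}) : Prop := forall x, deg E x = r.
Definition regular (E : {set Kset}) : Prop := exists r, regular_of r E.

Definition B_factorizable (E : {set Kset}) : Prop :=
  regular E /\
  forall v : vec, Nbar PM v -> (forall e : Kset, v (inl e) = nat_of_bool (e \in E)) ->
    Ncomb PM v.
End Defs.

(* Main.v *)
Require Import Defs.
From mathcomp Require Import all_boot.
Set Implicit Arguments. Unset Strict Implicit. Unset Printing Implicit Defensive.

Lemma sumb_card (T : finType) (Q : pred T) :
  \sum_e nat_of_bool (Q e) = #|[set e | Q e]|.
Proof.
rewrite -sum1_card [RHS]big_mkcond /=.
by apply: eq_bigr => e _; rewrite inE; case: (Q e).
Qed.

Lemma sum_ord_const n m : \sum_(i < n) m = n * m.
Proof. by rewrite sum_nat_const card_ord. Qed.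

Theorem mainTheorem7 (V : finType) (hV : ~~ odd #|V|) (E : {set Kset V}) :
  regular_of 2 E -> B_factorizable E.
Proof.
move=> reg2; split; first by exists 2.
move=> v [k [k1 [n [f [PMf Hf]]]]] vK.
have [g Hg] : exists g : 'I_n -> (Cset V * {set Kset V}),
    forall i, perfect_matching (g i).1 (g i).2 /\ f i = chiEc (g i).2 (g i).1.
  apply: (@fin_all_exists _ (fun _ => (Cset V * {set Kset V})%type) (fun i p => perfect_matching p.1 p.2 /\ f i = chiEc p.2 p.1)) => i; have [c [q [H1 H2]]] := PMf i; by exists (c, q).
pose cc i := (g i).1; pose qq i := (g i).2.
have HK : forall e, k * (e \in E) = \sum_i (e \in qq i).
  move=> e; rewrite -vK Hf; apply: eq_bigr => i _; by rewrite (proj2 (Hg i)).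
have HC : forall c, k * v (inr c) = \sum_i (c == cc i).
  move=> c; rewrite Hf; apply: eq_bigr => i _; by rewrite (proj2 (Hg i)).
have PMi : forall i, perfect_matching (cc i) (qq i) by move=> i; case: (Hg i).
clearbody cc qq; clear Hg PMf Hf.
case: (posnP #|V|) => [V0 | Vpos].
  have noV : forall y : V, False by move=> y; have := card0_eq V0 y.
  have s0 : forall S : {set V}, S = set0.
    by move=> S; apply/setP => y; case: (noV y).
  have noK : Kset V -> False.
    move=> [e he]; have := subset_leq_card (subsetT e); rewrite cardsT V0.
    by move: he => /eqP ->.
  have valC : forall c : Cset V, val c = [set set0; set0].
    move=> c; move: (valP c) => /existsP [H /existsP [A /and4P [/eqP -> _ _ _]]].
    by rewrite (s0 H) (s0 A).
  have uniqC : forall c c0 : Cset V, c = c0.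
    by move=> c c0; apply: val_inj; rewrite !valC.
  case: (pickP (fun _ : Cset V => true)) => [c0 _ | none].
    exists (v (inr c0)), (fun _ => chiEc set0 c0); split.
      move=> _; exists c0, set0; split; last by [].
      split; first by move=> e; rewrite in_set0.
      by move=> y; case: (noV y).
    move=> [e|c]; first by case: (noK e).
    by rewrite sum_ord_const /= (uniqC c c0) eqxx muln1.
  exists 0, (fun _ => fun _ => 0); split; first by case.
  by move=> [e|c]; [case: (noK e) | have := none c].
have [x _] := card_gt0P Vpos.
have Hn : 2 * k = n.
  rewrite -(reg2 x) /deg -sumb_card mulnC big_distrr /=.
  transitivity (\sum_e \sum_i ((e \in qq i) && (x \in val e) : nat)).
    apply: eq_bigr => e _; rewrite -mulnb mulnA HK big_distrl /=.
    by apply: eq_bigr => i _; rewrite -!mulnb.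
  rewrite exchange_big /= -[RHS]muln1 -sum_ord_const; apply: eq_bigr => i _.
  by rewrite sumb_card; case: (PMi i) => _ ->.
have HsumC : \sum_c v (inr c) = 2.
  apply/eqP; rewrite -(eqn_pmul2l k1) big_distrr /=.
  under eq_bigr => c _ do rewrite HC.
  rewrite exchange_big /= [k * 2]mulnC Hn -[X in _ == X]muln1 -sum_ord_const.
  apply/eqP; apply: eq_bigr => i _.
  by rewrite (bigD1 (cc i)) //= eqxx big1 // => c /negbTE ->.
have n0 : 0 < n by rewrite -Hn muln_gt0 k1.
pose i0 := Ordinal n0.
have supp : forall i, 0 < v (inr (cc i)).
  move=> i; rewrite lt0n; apply/eqP => h.
  by move: (HC (cc i)); rewrite h muln0 (bigD1 i) //= eqxx.
set c1 := cc i0; set q := qq i0.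
have [c2 [Hv Hc2]] : exists c2, (forall c, v (inr c) = (c == c1) + (c == c2))
    /\ (c2 = c1 \/ v (inr c1) = 1).
  move: HsumC; rewrite (bigD1 c1) //=.
  have h1 := supp i0.
  case: (posnP (\sum_(c | c != c1) v (inr c))) => [S0|Spos] Hs.
    exists c1; split; last by left.
    move=> c; case: (eqVneq c c1) => [->|ne].
      by move: Hs; rewrite S0 addn0 => ->.
    move: S0 => /eqP; rewrite sum_nat_eq0 => /forallP /(_ c); rewrite ne /= => /eqP ->.
    done.
  have [ea eb] : v (inr c1) = 1 /\ \sum_(c | c != c1) v (inr c) = 1.
    move: Hs h1 Spos; move: (v (inr c1)) (\sum_(c | c != c1) v (inr c)).
    by move=> [|[|a]] [|[|b]] //; rewrite ?addSn ?addnS.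
  move: Spos; rewrite lt0n sum_nat_eq0 negb_forall => /existsP [c2].
  rewrite negb_imply => /andP [ne hc2].
  move: eb; rewrite (bigD1 c2) //=.
  move: hc2; case E2: (v (inr c2)) => [|[|m]] //= _ eb.
  exists c2; split; last by right.
  move=> c; case: (eqVneq c c1) => [->|nc1]; first by rewrite eq_sym (negbTE ne) ea.
  case: (eqVneq c c2) => [->|nc2]; first by rewrite E2.
  have : \sum_(i | (i != c1) && (i != c2)) v (inr i) = 0.
    by move: eb; rewrite add1n => -[].
  move/eqP; rewrite sum_nat_eq0 => /forallP /(_ c); rewrite nc1 nc2 /= => /eqP ->.
  done.
have qE : q \subset E.
  apply/subsetP => e eq; move: (HK e); rewrite (bigD1 i0) //= eq.
  by case: (e \in E) => //; rewrite muln0.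
have edge2 : forall e, e \in E :\: q -> edgeB c2 e.
  move=> e; rewrite inE => /andP [nq eE].
  case: (boolP [exists i, (e \in qq i) && (cc i != c1)]) => [/existsP [i /andP [ei ne]] | none].
    move: (supp i); rewrite Hv (negbTE ne) add0n => h.
    have /eqP <- : cc i == c2 by move: h; case: (cc i == c2).
    exact: (PMi i).1 e ei.
  case: Hc2 => [e21 | v1].
    have : 0 < \sum_i (e \in qq i) by rewrite -HK eE muln1.
    rewrite lt0n sum_nat_eq0 negb_forall => /existsP [i] /= hi.
    have ei : e \in qq i by move: hi; case: (e \in qq i).
    move/existsPn: none => /(_ i); rewrite ei /= negbK => /eqP ci.
    rewrite e21 -ci; exact: (PMi i).1 e ei.
  exfalso; have h := HK e; rewrite eE muln1 in h.
  have hc := HC c1; rewrite v1 muln1 (bigD1 i0) //= eqxx add1n in hc.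
  have : k <= \sum_(i | i != i0) (c1 == cc i).
    rewrite h (bigD1 i0) //= (negbTE nq) add0n; apply: leq_sum => i _.
    move/existsPn: none => /(_ i); case: (e \in qq i) => //= /negPn /eqP ->.
    by rewrite eqxx.
  by rewrite hc ltnn.
have PM2 : perfect_matching c2 (E :\: q).
  split; first exact: edge2.
  move=> y.
  have -> : [set e in E :\: q | y \in val e] =
      [set e in E | y \in val e] :\: [set e in q | y \in val e].
    apply/setP => e; rewrite !inE.
    by case: (e \in q); case: (e \in E); case: (y \in val e).
  rewrite cardsD (setIidPr _).
    by move: (reg2 y) ((PMi i0).2 y); rewrite /deg => -> ->.
  apply/subsetP => e; rewrite !inE => /andP [a b].
  by rewrite (subsetP qE _ a) b.
exists 2, (fun i : 'I_2 => if val i == 0 then chiEc q c1 else chiEc (E :\: q) c2).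
split.
  move=> i; case: ifP => _.
    by exists c1, q; split => //; exact: PMi.
  by exists c2, (E :\: q).
move=> [e|c]; rewrite big_ord_recr big_ord_recr big_ord0 /=.
  rewrite vK inE; case h: (e \in q) => /=.
    by rewrite (subsetP qE _ h).
  by case: (e \in E).
by rewrite Hv !(eq_sym c).
Qed.
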